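(* Every poset $P$ embeds (as an ordered set) into the poset $AM_2(P(2))$.
   Context: For a poset $P$, $P(2)$ is the set $P\times\{0,1\}$ with the order: $(x,i)\leq(y,j)$ iff either ($i=j$ and $x\leq y$), or ($i=0$, $j=1$, and there exist incomparable elements $x',y'\in P$ with $x\leq x'$ and $y'\leq y$); this is a partial order. For a poset $Q$, $AM_2(Q)$ is the set of two-element maximal antichains of $Q$, ordered by domination: $X\leq Y$ iff for every $x\in X$ there is $y\in Y$ with $x\leq y$. An embedding is a map $e$ with $x\leq y\iff e(x)\leq e(y)$. *)

(* Defs.v *)
From HB Require Import structures.
From mathcomp Require Import all_boot all_order.
Set Implicit Arguments. Unset Strict Implicit. Unset Printing Implicit Defensive.
Import Order.Theory.
Local Open Scope order_scope.

(* The order of P(2) on P * bool (0 = false, 1 = true):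
   (x,i) <= (y,j) iff (i = j and x <= y) or
   (i = 0, j = 1 and there are incomparable x', y' with x <= x', y' <= y). *)
Definition P2le {d : Order.disp_t} {P : porderType d} (a b : P * bool) : Prop :=
  (a.2 = b.2 /\ a.1 <= b.1) \/
  (a.2 = false /\ b.2 = true /\
   exists x' y' : P, ~ (x' >=< y') /\ a.1 <= x' /\ y' <= b.1).

Definition antichain {Q : Type} (le : Q -> Q -> Prop) (A : Q -> Prop) : Prop :=
  forall x y, A x -> A y -> x <> y -> ~ le x y /\ ~ le y x.

Definition maximal_antichain {Q : Type} (le : Q -> Q -> Prop) (A : Q -> Prop) : Prop :=
  antichain le A /\
  forall B : Q -> Prop, antichain le B -> (forall x, A x -> B x) -> forall x, B x -> A x.

Definition in_AM2 {Q : Type} (le : Q -> Q -> Prop) (X : Q -> Prop) : Prop :=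
  maximal_antichain le X /\
  exists a b, a <> b /\ forall x, X x <-> (x = a \/ x = b).

Definition dominates {Q : Type} (le : Q -> Q -> Prop) (X Y : Q -> Prop) : Prop :=
  forall x, X x -> exists y, Y y /\ le x y.

(* Main.v *)
Require Import Defs.
From mathcomp Require Import all_boot all_order.
Import Order.Theory.
Local Open Scope order_scope.

Lemma not_up (d : Order.disp_t) (P : porderType d) (x : P) :
  ~ P2le (x, false) (x, true).
Proof.
case=> [[]//|[_ [_ [x' [y' [H1 [H2 H3]]]]]]].
apply: H1; rewrite comparable_sym; apply: le_comparable; exact: (le_trans H3 H2).
Qed.

Lemma not_down (d : Order.disp_t) (P : porderType d) (x y : P) :
  ~ P2le (x, true) (y, false).
Proof. by case=> [[]|[]]. Qed.

Lemma some_le (d : Order.disp_t) (P : porderType d) (x : P) (w : P * bool) :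
  exists i, P2le w (x, i) \/ P2le (x, i) w.
Proof.
case: w => z i.
case h: (x >=< z).
  exists i; case/orP: h => h.
    by right; left.
  by left; left.
case: i.
  exists false; right; right; split=> //; split=> //.
  by exists x, z; rewrite h; split=> //.
exists true; left; right; split=> //; split=> //.
exists z, x; rewrite comparable_sym h; split=> //.
Qed.

Theorem lemma6p2 (d : Order.disp_t) (P : porderType d) :
  exists e : P -> (P * bool -> Prop),
    (forall x, in_AM2 P2le (e x)) /\
    (forall x y : P, (x <= y)%O <-> dominates P2le (e x) (e y)).
Proof.
exists (fun x p => p = (x, false) \/ p = (x, true)); split.
  move=> x; split; last first.
    by exists (x, false), (x, true).
  split.
    move=> a b [->|->] [->|->] // _; split=> //;
      (apply: not_up || apply: not_down).
  move=> B HB HA w Bw.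
  case: (eqVneq w (x, false)) => [->|n1]; first by left.
  case: (eqVneq w (x, true)) => [->|n2]; first by right.
  have [i Hi] := @some_le _ _ x w.
  have Bi : B (x, i) by apply: HA; case: i {Hi}; [right|left].
  have ni : w <> (x, i) by case: i {Hi Bi}; apply/eqP.
  have [h1 h2] := HB _ _ Bw Bi ni.
  by case: Hi.
move=> x y; split.
  move=> le p [->|->]; [exists (y, false)|exists (y, true)];
    (split; [by [left|right] | by left]).
move=> D.
have [q [Hq Hl]] := D (x, true) (or_intror erefl).
case: Hq => ->{q} in Hl.
  by have := @not_down _ _ x y.
by case: Hl => [[_ ->]|[]].
Qed.
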